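(* Let $k$ be a field of characteristic $\neq 2$, $\mathcal A=k[t,t^{-1},(1-t)^{-1}]\subset k(t)$, $t'=1-t^{-1}$, $t''=(1-t)^{-1}$, $\mathfrak g=\mathfrak{sl}_2(k)\otimes_k\mathcal A$, and let $x=\begin{pmatrix}-1&2\\0&1\end{pmatrix}$, $y=\begin{pmatrix}-1&0\\-2&1\end{pmatrix}$, $z=\begin{pmatrix}1&0\\0&-1\end{pmatrix}$. Put $u_0=\tfrac14\bigl(z\otimes 1+x\otimes t''+y\otimes(t''-1)\bigr)$, $u_1=\tfrac14\bigl(x\otimes 1+y\otimes t+z\otimes(t-1)\bigr)$, $u_2=\tfrac14\bigl(y\otimes 1+z\otimes t'+x\otimes(t'-1)\bigr)$. Then: (i) $\{u_0,u_1,u_2\}$ is a basis of $\mathfrak g$ as an $\mathcal A$-module; (ii) $[u_0,u_1]=-u_2t$, $[u_1,u_2]=-u_0t'$, $[u_2,u_0]=-u_1t''$; (iii) $u_0,u_1,u_2$ generate $\mathfrak g$ as a Lie algebra over $k$.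
   Context: $\mathfrak g$ is a Lie algebra over $\mathcal A$ with bracket $[a\otimes f,b\otimes g]=[a,b]\otimes fg$; for $g\in\mathfrak g$ and $a\in\mathcal A$, $ga$ denotes the $\mathcal A$-module action. *)

(* Defs.v *)
From HB Require Import structures.
From mathcomp Require Import all_boot all_order all_algebra fraction.
Set Implicit Arguments. Unset Strict Implicit. Unset Printing Implicit Defensive.
Import Order.TTheory GRing.Theory.
Local Open Scope ring_scope.

Section Defs.
Variable k : fieldType.

Definition Kt := {fraction {poly k}}.
Definition tK : Kt := FracField.tofrac ('X : {poly k}).
Definition cst (c : k) : Kt := FracField.tofrac (c%:P).

(* A = k[t, t^-1, (1-t)^-1] inside k(t) *)
Definition inA (f : Kt) : Prop :=
  exists (p : {poly k}) (a b : nat),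
    f = FracField.tofrac p / (tK ^+ a * (1 - tK) ^+ b).

Definition t' : Kt := 1 - tK^-1.
Definition t'' : Kt := (1 - tK)^-1.

(* g = sl_2(k) (x)_k A, realised as trace-zero 2x2 matrices with entries in A *)
Definition inG (M : 'M[Kt]_2) : Prop :=
  \tr M = 0 /\ forall i j, inA (M i j).

Definition mx2 (a b c d : Kt) : 'M[Kt]_2 :=
  \matrix_(i < 2, j < 2)
    if i == 0 :> nat then (if j == 0 :> nat then a else b)
    else (if j == 0 :> nat then c else d).

Definition xm : 'M[Kt]_2 := mx2 (-1) 2 0 1.
Definition ym : 'M[Kt]_2 := mx2 (-1) 0 (-2) 1.
Definition zm : 'M[Kt]_2 := mx2 1 0 0 (-1).

(* Lie bracket: [a (x) f, b (x) g] = [a,b] (x) fg, i.e. matrix commutator *)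
Definition lie (M N : 'M[Kt]_2) : 'M[Kt]_2 := M *m N - N *m M.

Definition u0 : 'M[Kt]_2 := 4^-1 *: (zm + t'' *: xm + (t'' - 1) *: ym).
Definition u1 : 'M[Kt]_2 := 4^-1 *: (xm + tK *: ym + (tK - 1) *: zm).
Definition u2 : 'M[Kt]_2 := 4^-1 *: (ym + t' *: zm + (t' - 1) *: xm).

Inductive lie_gen (S : 'M[Kt]_2 -> Prop) : 'M[Kt]_2 -> Prop :=
  | lg_base M : S M -> lie_gen S M
  | lg_zero : lie_gen S 0
  | lg_add M N : lie_gen S M -> lie_gen S N -> lie_gen S (M + N)
  | lg_scale (c : k) M : lie_gen S M -> lie_gen S (cst c *: M)
  | lg_bracket M N : lie_gen S M -> lie_gen S N -> lie_gen S (lie M N).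

End Defs.

(* Main.v *)
Require Import Defs.
From HB Require Import structures.
From mathcomp Require Import all_boot all_order all_algebra fraction.
Import GRing.Theory.
Local Open Scope ring_scope.
From mathcomp Require Import ring.
Set Implicit Arguments. Unset Strict Implicit. Unset Printing Implicit Defensive.
Import GRing.Theory.
Local Open Scope ring_scope.

Section G.
Variables (F : fieldType) (t : F).
Hypotheses (ht : t != 0) (ht1 : 1 - t != 0) (h2 : (2:F) != 0).

Definition gmx2 (a b c d : F) : 'M[F]_2 :=
  \matrix_(i < 2, j < 2)
    if i == 0 :> nat then (if j == 0 :> nat then a else b)
    else (if j == 0 :> nat then c else d).
Definition gx := gmx2 (-1) 2 0 1.
Definition gy := gmx2 (-1) 0 (-2) 1.
Definition gz := gmx2 1 0 0 (-1).
Definition gt' : F := 1 - t^-1.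
Definition gt'' : F := (1 - t)^-1.
Definition glie (M N : 'M[F]_2) : 'M[F]_2 := M *m N - N *m M.
Definition gu0 : 'M[F]_2 := 4^-1 *: (gz + gt'' *: gx + (gt'' - 1) *: gy).
Definition gu1 : 'M[F]_2 := 4^-1 *: (gx + t *: gy + (t - 1) *: gz).
Definition gu2 : 'M[F]_2 := 4^-1 *: (gy + gt' *: gz + (gt' - 1) *: gx).

Lemma h4 : (4:F) != 0.
Proof. have -> : (4:F) = 2 * 2 by ring. by rewrite mulf_neq0. Qed.

Lemma gmx2E (a b c d : F) i j : gmx2 a b c d i j =
  if i == 0 :> nat then (if j == 0 :> nat then a else b)
  else (if j == 0 :> nat then c else d).
Proof. by rewrite mxE. Qed.

Lemma gmx2_eq (a b c d a' b' c' d' : F) : a = a' -> b = b' -> c = c' -> d = d' ->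
  gmx2 a b c d = gmx2 a' b' c' d'.
Proof. by move=> -> -> -> ->. Qed.

Lemma gmx2_inj (a b c d a' b' c' d' : F) : gmx2 a b c d = gmx2 a' b' c' d' ->
  [/\ a = a', b = b', c = c' & d = d'].
Proof.
move=> h; have e := fun i j => congr1 (fun M : 'M[F]_2 => M i j) h.
move: (e 0 0) (e 0 1) (e 1 0) (e 1 1); rewrite !gmx2E /=; by [].
Qed.

Lemma gmx2_mul (a b c d a' b' c' d' : F) : gmx2 a b c d *m gmx2 a' b' c' d' =
  gmx2 (a*a' + b*c') (a*b' + b*d') (c*a' + d*c') (c*b'+d*d').
Proof.
apply/matrixP => i j; rewrite !mxE !big_ord_recr big_ord0 /= add0r !mxE.
by case: i => [[|[|]]] //= _; case: j => [[|[|]]].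
Qed.

Lemma gmx2_add (a b c d a' b' c' d' : F) : gmx2 a b c d + gmx2 a' b' c' d' =
  gmx2 (a+a') (b+b') (c+c') (d+d').
Proof.
apply/matrixP => i j; rewrite !mxE.
by case: i => [[|[|]]] //= _; case: j => [[|[|]]].
Qed.

Lemma gmx2_opp (a b c d : F) : - gmx2 a b c d = gmx2 (-a) (-b) (-c) (-d).
Proof.
apply/matrixP => i j; rewrite !mxE.
by case: i => [[|[|]]] //= _; case: j => [[|[|]]].
Qed.

Lemma gmx2_scale (e a b c d : F) : e *: gmx2 a b c d = gmx2 (e*a) (e*b) (e*c) (e*d).
Proof.
apply/matrixP => i j; rewrite !mxE.
by case: i => [[|[|]]] //= _; case: j => [[|[|]]].
Qed.

Lemma gmx2_0 : (0 : 'M[F]_2) = gmx2 0 0 0 0.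
Proof.
apply/matrixP => i j; rewrite !mxE.
by case: i => [[|[|]]] //= _; case: j => [[|[|]]].
Qed.

Lemma gmx2_tr (a b c d : F) : \tr (gmx2 a b c d) = a + d.
Proof. by rewrite /mxtrace !big_ord_recr big_ord0 /= add0r !mxE. Qed.

Lemma gmx2_eta (M : 'M[F]_2) : M = gmx2 (M 0 0) (M 0 1) (M 1 0) (M 1 1).
Proof.
apply/matrixP => i j; rewrite !mxE.
by case: i => [[|[|]]] //= ?; case: j => [[|[|]]] //= ?; congr (M _ _); apply: val_inj.
Qed.

Definition gs := t * gt''.

Ltac simpmx := do 3 rewrite ?gmx2_scale ?gmx2_mul ?gmx2_opp ?gmx2_add.

Lemma gu0E : gu0 = gmx2 (-gs/2) (gt''/2) (-gs/2) (gs/2).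
Proof.
rewrite /gu0 /gx /gy /gz; simpmx; apply: gmx2_eq; rewrite /gs /gt''; field;
  by rewrite ?h2 ?h4 ?ht1.
Qed.
Lemma gu1E : gu1 = gmx2 (-1/2) (1/2) (-t/2) (1/2).
Proof.
rewrite /gu1 /gx /gy /gz; simpmx; apply: gmx2_eq; field; by rewrite ?h2 ?h4 ?ht1.
Qed.
Lemma gu2E : gu2 = gmx2 0 (-t^-1/2) (-1/2) 0.
Proof.
rewrite /gu2 /gx /gy /gz; simpmx; apply: gmx2_eq; rewrite /gt'; field; by rewrite ?h2 ?h4 ?ht.
Qed.

Lemma glie01 : glie gu0 gu1 = - (t *: gu2).
Proof.
rewrite /glie gu0E gu1E gu2E; simpmx; apply: gmx2_eq; rewrite /gs /gt''; field;
  by rewrite ?h2 ?h4 ?ht1 ?ht.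
Qed.
Lemma glie12 : glie gu1 gu2 = - (gt' *: gu0).
Proof.
rewrite /glie gu0E gu1E gu2E; simpmx; apply: gmx2_eq; rewrite /gs /gt'' /gt'; field;
  by rewrite ?h2 ?h4 ?ht1 ?ht.
Qed.
Lemma glie20 : glie gu2 gu0 = - (gt'' *: gu1).
Proof.
rewrite /glie gu0E gu1E gu2E; simpmx; apply: gmx2_eq; rewrite /gs /gt'' /gt'; field;
  by rewrite ?h2 ?h4 ?ht1 ?ht.
Qed.


Lemma gspan (a b c : F) :
  gmx2 a b c (-a) = (2 * a + b - c / t) *: gu0 + (- (2 * a) - gs * (2 * a + b - c / t)) *: gu1
     + (- c - t * b) *: gu2.
Proof.
rewrite gu0E gu1E gu2E; simpmx; apply: gmx2_eq; rewrite /gs /gt''; field;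
  by rewrite ?h2 ?h4 ?ht1 ?ht.
Qed.

Lemma gcomb (a0 a1 a2 : F) :
  a0 *: gu0 + a1 *: gu1 + a2 *: gu2 =
  gmx2 ((-gs*a0 - a1)/2) ((gt'' * a0 + a1 - a2/t)/2) ((-gs*a0 - t*a1 - a2)/2) ((gs*a0 + a1)/2).
Proof.
rewrite gu0E gu1E gu2E; simpmx; apply: gmx2_eq; rewrite /gs /gt''; field;
  by rewrite ?h2 ?h4 ?ht1 ?ht.
Qed.

Lemma gindep (a0 a1 a2 : F) :
  a0 *: gu0 + a1 *: gu1 + a2 *: gu2 = 0 -> [/\ a0 = 0, a1 = 0 & a2 = 0].
Proof.
rewrite gcomb gmx2_0 => /gmx2_inj [e00 e01 e10 _].
have E2 : a2 = - ((-gs*a0 - t*a1 - a2)/2) - t * ((gt'' * a0 + a1 - a2/t)/2).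
  rewrite /gs /gt''; field; by rewrite ?h2 ?h4 ?ht1 ?ht.
rewrite e01 e10 in E2.
have E0 : a0 = 2 * ((-gs*a0 - a1)/2) + ((gt'' * a0 + a1 - a2/t)/2)
   - ((-gs*a0 - t*a1 - a2)/2) / t.
  rewrite /gs /gt''; field; by rewrite ?h2 ?h4 ?ht1 ?ht.
rewrite e00 e01 e10 in E0.
have E1 : a1 = - (2 * ((-gs*a0 - a1)/2)) - gs * a0.
  rewrite /gs /gt''; field; by rewrite ?h2 ?h4 ?ht1 ?ht.
rewrite e00 in E1.
have z0 : a0 = 0 by rewrite E0; ring.
split; [exact z0| |by rewrite E2; ring].
by rewrite E1 z0; ring.
Qed.

Lemma gtr0 : \tr gu0 = 0 /\ \tr gu1 = 0 /\ \tr gu2 = 0.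
Proof.
rewrite gu0E gu1E gu2E !gmx2_tr; split; [|split]; field; by rewrite ?h2.
Qed.


Section Gen.
Variables P0 P1 P2 : F -> Prop.
Hypotheses (N0 : forall f, P0 f -> P0 (-f)) (N1 : forall f, P1 f -> P1 (-f))
  (N2 : forall f, P2 f -> P2 (-f)).
Hypotheses (O0 : P0 1) (O1 : P1 1) (O2 : P2 1).
Hypotheses (R2 : forall f g, P0 f -> P1 g -> P2 (- (f * g * t)))
  (R0 : forall f g, P1 f -> P2 g -> P0 (- (f * g * gt')))
  (R1 : forall f g, P2 f -> P0 g -> P1 (- (f * g * gt''))).

Lemma Pext (P : F -> Prop) f g : P f -> f = g -> P g.
Proof. by move=> h <-. Qed.

Lemma L1 f : P0 f -> P0 (f / t).
Proof.
move=> h; apply: (Pext (N0 (R0 (R1 O2 h) O2))).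
rewrite /gt'' /gt'; field; by rewrite ?ht ?ht1.
Qed.

Lemma L2 f : P0 f -> P0 ((1 - t) * f).
Proof.
move=> h; apply: (Pext (N0 (R0 O1 (R2 h O1)))).
rewrite /gt'' /gt'; field; by rewrite ?ht ?ht1.
Qed.

Lemma L3 f : P2 f -> P2 (f * gs).
Proof.
move=> h; apply: (Pext (R2 O0 (R1 h O0))).
rewrite /gs /gt'' /gt'; field; by rewrite ?ht ?ht1.
Qed.

Lemma L4 n : P2 (gs ^+ n).
Proof. elim: n => [|n IH]; first by rewrite expr0. by rewrite exprSr; apply: L3. Qed.

Lemma L6 n : P0 (t ^+ n / (t * (1 - t) ^+ n)).
Proof.
apply: (Pext (R0 (N1 (R1 O2 O0)) (L4 n))).
rewrite /gs /gt'' /gt' exprMn exprVn; field; by rewrite ?ht ?ht1 ?expf_neq0.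
Qed.

Lemma L7a a f : P0 f -> P0 (f / t ^+ a).
Proof.
elim: a f => [|a IH] f h; first by rewrite expr0 invr1 mulr1.
apply: (Pext (L1 (IH _ h))); rewrite exprSr invfM; ring.
Qed.

Lemma L7b b f : P0 f -> P0 ((1 - t) ^+ b * f).
Proof.
elim: b f => [|b IH] f h; first by rewrite expr0 mul1r.
apply: (Pext (L2 (IH _ h))); rewrite exprS; ring.
Qed.

Lemma L8 n a d : P0 (t ^+ n / (t ^+ a * (1 - t) ^+ d)).
Proof.
apply: (Pext (L7a (d + a) (L7b n.+1 (L6 (d + n).+1)))).
rewrite !exprS !exprD; field; by rewrite ?ht ?ht1 ?expf_neq0.
Qed.

Lemma L9 n a d : P2 (t ^+ n / (t ^+ a * (1 - t) ^+ d)).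
Proof.
apply: (Pext (R2 (N0 (L8 n a.+1 d)) O1)).
rewrite !exprS; field; by rewrite ?ht ?ht1 ?expf_neq0.
Qed.

Lemma L10 n a d : P1 (t ^+ n / (t ^+ a * (1 - t) ^+ d)).
Proof.
apply: (Pext (R1 O2 (N0 (L2 (L8 n a d))))).
rewrite /gt''; field; by rewrite ?ht ?ht1 ?expf_neq0.
Qed.

End Gen.

End G.

Lemma gadd (F : fieldType) (t u p1 p2 : F) a1 b1 a2 b2 : t != 0 -> u != 0 ->
  p1 / (t ^+ a1 * u ^+ b1) + p2 / (t ^+ a2 * u ^+ b2) =
  (p1 * t ^+ a2 * u ^+ b2 + p2 * t ^+ a1 * u ^+ b1) / (t ^+ (a1 + a2) * u ^+ (b1 + b2)).
Proof. move=> ht hu; rewrite !exprD; field; by rewrite ?expf_neq0. Qed.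

Lemma gmul (F : fieldType) (t u p1 p2 : F) a1 b1 a2 b2 : t != 0 -> u != 0 ->
  p1 / (t ^+ a1 * u ^+ b1) * (p2 / (t ^+ a2 * u ^+ b2)) =
  (p1 * p2) / (t ^+ (a1 + a2) * u ^+ (b1 + b2)).
Proof. move=> ht hu; rewrite !exprD; field; by rewrite ?expf_neq0. Qed.

Section C.
Variable k : fieldType.
Hypothesis hchar : (2 \notin [pchar k])%N.
Local Notation K := (Kt k).
Local Notation t := (tK k).
Local Notation tf := (@FracField.tofrac _).

Lemma two_nz : (2 : K) != 0.
Proof.
have h2 : (2%:R : k) != 0.
  apply/negP => /eqP h; move/negP: hchar; apply; by rewrite inE h eqxx.
have -> : (2 : K) = FracField.tofrac (2%:R : k)%:P by rewrite polyC_natr rmorph_nat.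
by rewrite tofrac_eq0 polyC_eq0.
Qed.

Lemma t_nz : t != 0.
Proof. by rewrite /tK tofrac_eq0 polyX_eq0. Qed.

Lemma omt_nz : 1 - t != 0.
Proof.
rewrite /tK -tofrac1 -tofracB tofrac_eq0 subr_eq0; apply/negP => /eqP h.
have := congr1 (fun p : {poly k} => size p) h; by rewrite size_polyX size_poly1.
Qed.

Lemma cu0 : u0 k = gu0 t. Proof. reflexivity. Qed.
Lemma cu1 : u1 k = gu1 t. Proof. reflexivity. Qed.
Lemma cu2 : u2 k = gu2 t. Proof. reflexivity. Qed.
Lemma ct' : t' k = gt' t. Proof. reflexivity. Qed.
Lemma ct'' : t'' k = gt'' t. Proof. reflexivity. Qed.
Lemma cmx2 (a b c d : K) : mx2 a b c d = gmx2 a b c d. Proof. reflexivity. Qed.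

Lemma tfX (p : {poly k}) : tf p = FracField.tofrac p. Proof. by []. Qed.

Lemma inA_frac p : @inA k (FracField.tofrac p : K).
Proof. exists p, 0%N, 0%N; by rewrite !expr0 mulr1 invr1 mulr1. Qed.

Lemma tf_omX : FracField.tofrac (1 - 'X : {poly k}) = 1 - t.
Proof. by rewrite rmorphB rmorph1. Qed.

Lemma inA_add f g : inA f -> inA g -> @inA k (f + g).
Proof.
move=> [p1 [a1 [b1 ->]]] [p2 [a2 [b2 ->]]].
rewrite (gadd _ _ _ _ _ _ t_nz omt_nz).
exists (p1 * 'X^a2 * (1 - 'X)^+b2 + p2 * 'X^a1 * (1 - 'X)^+b1), (a1+a2)%N, (b1+b2)%N.
by rewrite rmorphD !rmorphM !rmorphXn !rmorphB !rmorph1.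
Qed.

Lemma inA_mul f g : inA f -> inA g -> @inA k (f * g).
Proof.
move=> [p1 [a1 [b1 ->]]] [p2 [a2 [b2 ->]]].
rewrite (gmul _ _ _ _ _ _ t_nz omt_nz).
exists (p1 * p2), (a1+a2)%N, (b1+b2)%N.
by rewrite rmorphM.
Qed.

Lemma inA_opp f : inA f -> @inA k (- f).
Proof.
move=> h; rewrite -mulN1r; apply: inA_mul => //.
by rewrite -tofrac1 -tofracN; apply: inA_frac.
Qed.


Lemma inA_nat n : @inA k (n%:R : K).
Proof. have -> : (n%:R : K) = FracField.tofrac (n%:R) by rewrite rmorph_nat. exact: inA_frac. Qed.

Lemma inA_t : @inA k t.
Proof. exact: inA_frac. Qed.

Lemma inA_tinv : @inA k (t^-1).
Proof. exists 1, 1%N, 0%N; by rewrite rmorph1 expr1 expr0 mulr1 mul1r. Qed.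

Lemma inA_t'' : @inA k (gt'' t).
Proof. exists 1, 0%N, 1%N; by rewrite rmorph1 expr1 expr0 mul1r mul1r. Qed.

Lemma inA_half : @inA k (2^-1 : K).
Proof.
have h2 : (2%:R : k) != 0.
  apply/negP => /eqP h; move/negP: hchar; apply; by rewrite inE h eqxx.
have -> : (2^-1 : K) = FracField.tofrac ((2%:R : k)^-1)%:P.
  apply: (mulIf two_nz); rewrite mulVf ?two_nz //.
  have -> : (2 : K) = FracField.tofrac (2%:R : k)%:P by rewrite polyC_natr rmorph_nat.
  by rewrite -rmorphM -polyCM mulVf // rmorph1.
exact: inA_frac.
Qed.

Lemma inA_0 : @inA k 0.
Proof. rewrite -tofrac0; exact: inA_frac. Qed.
Lemma inA_1 : @inA k 1.
Proof. rewrite -tofrac1; exact: inA_frac. Qed.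

Ltac inAt := repeat match goal with
 | |- inA (_ + _) => apply: inA_add
 | |- inA (_ * _) => apply: inA_mul
 | |- inA (- _) => apply: inA_opp
 | |- inA (tK _) => exact: inA_t
 | |- inA ((tK _)^-1) => exact: inA_tinv
 | |- inA (gt'' _) => exact: inA_t''
 | |- inA (2^-1) => exact: inA_half
 | |- inA 1 => exact: inA_1
 | |- inA 0 => exact: inA_0
 | |- inA (_%:R) => exact: inA_nat
 | |- _ => assumption
 end.

Lemma inG_u : inG (u0 k) /\ inG (u1 k) /\ inG (u2 k).
Proof.
have [tr0 [tr1 tr2]] := gtr0 t_nz omt_nz two_nz.
rewrite cu0 cu1 cu2; split; [|split]; split; [exact: tr0| |exact: tr1| |exact: tr2|].
- rewrite (gu0E omt_nz two_nz) /gs => i j; rewrite gmx2E.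
  case: ifP => _; case: ifP => _; inAt.
- rewrite (gu1E t two_nz) => i j; rewrite gmx2E.
  case: ifP => _; case: ifP => _; inAt.
- rewrite (gu2E t_nz two_nz) => i j; rewrite gmx2E.
  case: ifP => _; case: ifP => _; inAt.
Qed.

Lemma span_u (M : 'M[K]_2) : inG M -> exists a0 a1 a2 : K,
  [/\ inA a0, inA a1, inA a2 & M = a0 *: u0 k + a1 *: u1 k + a2 *: u2 k].
Proof.
move=> [htr hA].
have e : M 1 1 = - M 0 0.
  move: htr; rewrite {1}(gmx2_eta M) gmx2_tr => /eqP htr.
  by apply/eqP; rewrite -addr_eq0 addrC.
exists (2 * M 0 0 + M 0 1 - M 1 0 / t), (- (2 * M 0 0) - gs t * (2 * M 0 0 + M 0 1 - M 1 0 / t)),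
  (- M 1 0 - t * M 0 1).
have h00 := hA 0 0; have h01 := hA 0 1; have h10 := hA 1 0.
split; [rewrite /gs; inAt|rewrite /gs; inAt|rewrite /gs; inAt|].
rewrite cu0 cu1 cu2 -(gspan t_nz omt_nz two_nz) -e.
exact: gmx2_eta.
Qed.

Lemma indep_u (a0 a1 a2 : K) :
  a0 *: u0 k + a1 *: u1 k + a2 *: u2 k = 0 -> [/\ a0 = 0, a1 = 0 & a2 = 0].
Proof. rewrite cu0 cu1 cu2; exact: (gindep t_nz omt_nz two_nz). Qed.

Lemma lie01 : lie (u0 k) (u1 k) = - (t *: u2 k).
Proof. exact: (glie01 t_nz omt_nz two_nz). Qed.
Lemma lie12 : lie (u1 k) (u2 k) = - (t' k *: u0 k).
Proof. exact: (glie12 t_nz omt_nz two_nz). Qed.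
Lemma lie20 : lie (u2 k) (u0 k) = - (t'' k *: u1 k).
Proof. exact: (glie20 t_nz omt_nz two_nz). Qed.

Definition SS (N : 'M[K]_2) : Prop := N = u0 k \/ N = u1 k \/ N = u2 k.
Definition PP (u : 'M[K]_2) (f : K) : Prop := lie_gen SS (f *: u).

Lemma cstN1 : cst (-1 : k) = -1.
Proof. by rewrite /cst polyCN rmorphN polyC1 rmorph1. Qed.

Lemma PP_neg u f : PP u f -> PP u (- f).
Proof.
move=> h; have := lg_scale (-1) h; by rewrite scalerA cstN1 mulN1r.
Qed.

Lemma PP_cst u c f : PP u f -> PP u (cst c * f).
Proof. move=> h; rewrite /PP -scalerA; exact: lg_scale. Qed.

Lemma PP_add u f g : PP u f -> PP u g -> PP u (f + g).
Proof. move=> h1 h2; rewrite /PP scalerDl; exact: lg_add. Qed.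

Lemma PP_0 u : PP u 0.
Proof. rewrite /PP scale0r; exact: lg_zero. Qed.

Lemma PP_1 u : SS u -> PP u 1.
Proof. move=> h; rewrite /PP scale1r; exact: lg_base. Qed.

Lemma lieZ (a b : K) (M N : 'M[K]_2) : lie (a *: M) (b *: N) = (a * b) *: lie M N.
Proof.
rewrite /lie -!scalemxAl -!scalemxAr !scalerA scalerBr; congr (_ *: _ - _ *: _).
by rewrite mulrC.
Qed.

Lemma R2c f g : PP (u0 k) f -> PP (u1 k) g -> PP (u2 k) (- (f * g * t)).
Proof.
move=> h1 h2; have := lg_bracket h1 h2.
by rewrite lieZ lie01 scalerN scalerA -scaleNr.
Qed.
Lemma R0c f g : PP (u1 k) f -> PP (u2 k) g -> PP (u0 k) (- (f * g * gt' t)).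
Proof.
move=> h1 h2; have := lg_bracket h1 h2.
by rewrite lieZ lie12 scalerN scalerA -scaleNr.
Qed.
Lemma R1c f g : PP (u2 k) f -> PP (u0 k) g -> PP (u1 k) (- (f * g * gt'' t)).
Proof.
move=> h1 h2; have := lg_bracket h1 h2.
by rewrite lieZ lie20 scalerN scalerA -scaleNr.
Qed.

Lemma S0 : SS (u0 k). Proof. by left. Qed.
Lemma S1 : SS (u1 k). Proof. by right; left. Qed.
Lemma S2 : SS (u2 k). Proof. by right; right. Qed.

Lemma allP n a d :
  let f := t ^+ n / (t ^+ a * (1 - t) ^+ d) in
  [/\ PP (u0 k) f, PP (u1 k) f & PP (u2 k) f].
Proof.
split.
- exact: (L8 t_nz omt_nz (@PP_neg _) (@PP_neg _) (PP_1 S0) (PP_1 S1) (PP_1 S2) R2c R0c R1c).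
- exact: (L10 t_nz omt_nz (@PP_neg _) (@PP_neg _) (PP_1 S0) (PP_1 S1) (PP_1 S2) R2c R0c R1c).
- exact: (L9 t_nz omt_nz (@PP_neg _) (@PP_neg _) (PP_1 S0) (PP_1 S1) (PP_1 S2) R2c R0c R1c).
Qed.

Lemma tofrac_sum (p : {poly k}) :
  FracField.tofrac p = \sum_(i < size p) cst p`_i * t ^+ i.
Proof.
rewrite -{1}(coefK p) poly_def rmorph_sum; apply: eq_bigr => i _.
by rewrite -mul_polyC rmorphM rmorphXn.
Qed.

Lemma PP_A u f : SS u -> inA f -> PP u f.
Proof.
move=> hu [p [a [b ->]]].
rewrite tofrac_sum mulr_suml.
apply: (big_ind (PP u)); [exact: PP_0 | exact: PP_add | move=> i _].
rewrite -mulrA; apply: PP_cst.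
have [h0 h1 h2] := allP i a b.
by case: hu => [->|[->|->]]; [exact: h0|exact: h1|exact: h2].
Qed.

End C.

Unset Implicit Arguments.

Theorem theorem1p2 (k : fieldType) (hchar : (2 \notin [pchar k])%N) :
  (* (i) u0,u1,u2 form a basis of g as an A-module *)
  ((inG (u0 k) /\ inG (u1 k) /\ inG (u2 k)) /\
   (forall M, inG M -> exists a0 a1 a2 : Kt k,
       [/\ inA a0, inA a1, inA a2 & M = a0 *: u0 k + a1 *: u1 k + a2 *: u2 k]) /\
   (forall a0 a1 a2 : Kt k, inA a0 -> inA a1 -> inA a2 ->
       a0 *: u0 k + a1 *: u1 k + a2 *: u2 k = 0 -> [/\ a0 = 0, a1 = 0 & a2 = 0])) /\
  (* (ii) bracket relations *)
  (lie (u0 k) (u1 k) = - (tK k *: u2 k) /\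
   lie (u1 k) (u2 k) = - (t' k *: u0 k) /\
   lie (u2 k) (u0 k) = - (t'' k *: u1 k)) /\
  (* (iii) u0,u1,u2 generate g as a Lie algebra over k *)
  (forall M, inG M ->
     lie_gen (fun N => N = u0 k \/ N = u1 k \/ N = u2 k) M).
Proof.
split; [split; [exact: (inG_u hchar)|split]|split].
- move=> M hM; exact: (span_u hchar hM).
- move=> a0 a1 a2 _ _ _; exact: (indep_u hchar).
- split; [exact: (lie01 hchar)|split; [exact: (lie12 hchar)|exact: (lie20 hchar)]].
- move=> M hM; have [a0 [a1 [a2 [h0 h1 h2 ->]]]] := span_u hchar hM.
  apply: lg_add; [apply: lg_add|].
  + exact: (PP_A hchar (S0 k) h0).
  + exact: (PP_A hchar (S1 k) h1).
  + exact: (PP_A hchar (S2 k) h2).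
Qed.
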